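(* For the propositional CNF formula $MAP_n^1$ (defined in the context), every DPLL refutation of $MAP_n^1$ has size exponential in $n$.
   Context: MAP planning domain. Fix $n\ge 2$. The map is an undirected graph with $3n-3$ nodes: a centre $L^0$; a path (branch 1) $L^0 - L_1^1 - \dots - L_1^{2n-3}$; and, for each $i=2,\dots,n$, a single node $L_i^1$ adjacent to $L^0$. Facts are $at\text{-}x$ and $visited\text{-}x$. For every edge $\{x,y\}$ and both orientations there is an action $move\text{-}x\text{-}y$ with precondition $\{at\text{-}x\}$, add effects $\{at\text{-}y, visited\text{-}y\}$, delete effect $\{at\text{-}x\}$. The initial state is $\{at\text{-}L^0\}$. The goal of $MAP_n^1$ is $\{visited\text{-}L_1^1,\dots,visited\text{-}L_n^1\}$. The CNF formula $MAP_n^1$ is the standard Graphplan-based (Blackbox-style) SAT encoding of this task with $T=2n-2$ time steps (unsatisfiable, since a shortest plan has $2n-1$ steps). Build the Graphplan planning graph from the initial state, with a NOOP action $NOOP\text{-}p$ (precondition and add effect $\{p\}$) for each fact $p$. For each $t=1,\dots,T$ there is a variable $a(t)$ for every action $a$ (including NOOPs) in action layer $t$. Clauses: goal clauses $\{a(T): g\in add(a)\}$ for each goal $g$; precondition clauses $\{\neg a(t)\}\cup\{a'(t-1): p\in add(a')\}$ for each $a(t)$, $t\ge 2$, $p\in pre(a)$; mutex clauses $\{\neg a(t),\neg a'(t)\}$ for pairs of actions Graphplan marks mutually exclusive at layer $t$ (interference or competing needs); in particular any two move actions at the same step are mutually exclusive. A DPLL refutation is a search tree of the Davis–Putnam–Logemann–Loveland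 procedure (branching on variables, with unit propagation) in which every leaf yields an empty clause; its size is the number of nodes. *)

(* Defs.v *)
From HB Require Import structures.
From mathcomp Require Import all_boot.

Set Implicit Arguments.
Unset Strict Implicit.
Unset Printing Implicit Defensive.

Section Graphplan.
Variables (F A : eqType).
(* all ground actions, INCLUDING the NOOPs *)
Variable acts : seq A.
Variables (pre add del : A -> seq F).
Variable init : seq F.

Definition interferes (a b : A) : bool :=
  has (fun p => (p \in pre b) || (p \in add b)) (del a) ||
  has (fun p => (p \in pre a) || (p \in add a)) (del b).

Definition act_layer (Fs : seq F) (fm : rel F) : seq A :=
  [seq a <- acts | all (fun p => p \in Fs) (pre a) &&
                   all (fun p => all (fun q => ~~ fm p q) (pre a)) (pre a)].

(* action mutex (interference or competing needs), fm = fact mutex of the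
   preceding fact layer *)
Definition amutex (fm : rel F) (a b : A) : bool :=
  (a != b) &&
  (interferes a b || has (fun p => has (fun q => fm p q) (pre b)) (pre a)).

Definition fact_layer (As : seq A) : seq F := undup (flatten (map add As)).

Definition fmutex_next (As : seq A) (fm : rel F) : rel F :=
  fun p q => [&& p != q, p \in fact_layer As, q \in fact_layer As &
     all (fun a => (p \in add a) ==>
          all (fun b => (q \in add b) ==> amutex fm a b) As) As].

Fixpoint layer (t : nat) : seq F * rel F :=
  match t with
  | 0 => (init, fun _ _ => false)
  | t'.+1 => let: (Fs, fm) := layer t' in
             let As := act_layer Fs fm in (fact_layer As, fmutex_next As fm)
  end.

(* action layer t (t >= 1) and its mutex relation *)
Definition actions_at (t : nat) : seq A := act_layer (layer t.-1).1 (layer t.-1).2.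
Definition amutex_at (t : nat) (a b : A) : bool := amutex (layer t.-1).2 a b.

Definition gvar := (A * nat)%type.
Definition glit := (gvar * bool)%type.

Variable goals : seq F.
Variable T : nat.

Definition goal_clauses : seq (seq glit) :=
  [seq [seq ((a, T), true) | a <- actions_at T & g \in add a] | g <- goals].

Definition pre_clauses : seq (seq glit) :=
  flatten [seq flatten [seq [seq ((a, t), false) ::
                 [seq ((a', t.-1), true) | a' <- actions_at t.-1 & p \in add a']
               | p <- pre a] | a <- actions_at t] | t <- iota 2 T.-1].

Definition mutex_clauses : seq (seq glit) :=
  flatten [seq flatten [seq [seq [:: ((a, t), false); ((b, t), false)]
               | b <- actions_at t & amutex_at t a b] | a <- actions_at t]
          | t <- iota 1 T].

Definition graphplan_cnf : seq (seq glit) :=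
  goal_clauses ++ pre_clauses ++ mutex_clauses.

End Graphplan.

Section DPLL.
Variable V : eqType.
Definition lit := (V * bool)%type.          (* (x, true) = x, (x, false) = ~x *)
Definition clause := seq lit.
Definition cnf := seq clause.
Definition passign := seq lit.               (* set of literals made true *)

Variable phi : cnf.

Definition lit_true (rho : passign) (l : lit) : bool := l \in rho.
Definition lit_false (rho : passign) (l : lit) : bool := (l.1, ~~ l.2) \in rho.
Definition clause_sat (rho : passign) (C : clause) : bool := has (lit_true rho) C.
Definition clause_falsified (rho : passign) (C : clause) : bool := all (lit_false rho) C.

Definition unit_lit (rho : passign) (C : clause) : option lit :=
  if clause_sat rho C then None else
  match undup [seq l <- C | ~~ lit_false rho l] with
  | [:: l] => Some l
  | _ => None
  end.

Definition up_step (rho : passign) : passign :=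
  match ohead (pmap (unit_lit rho) phi) with
  | Some l => l :: rho
  | None => rho
  end.

(* unit propagation to a fixpoint (each step satisfies a new clause, so
   size phi steps suffice) *)
Definition propagate (rho : passign) : passign := iter (size phi) up_step rho.

Definition conflict (rho : passign) : bool := has (clause_falsified rho) phi.
Definition assigned (rho : passign) (v : V) : bool := ((v, true) \in rho) || ((v, false) \in rho).
Definition vars : seq V := flatten [seq [seq l.1 | l <- C] | C <- phi].

Inductive dtree := DLeaf | DNode of V & dtree & dtree.

Fixpoint dsize (t : dtree) : nat :=
  match t with DLeaf => 1 | DNode _ t0 t1 => (dsize t0 + dsize t1).+1 end.

Fixpoint dpll_ref (rho : passign) (t : dtree) : bool :=
  let rho' := propagate rho in
  match t with
  | DLeaf => conflict rho'
  | DNode v t0 t1 =>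
      [&& ~~ conflict rho', v \in vars, ~~ assigned rho' v,
          dpll_ref ((v, false) :: rho') t0 & dpll_ref ((v, true) :: rho') t1]
  end.

Definition DPLL_refutation (t : dtree) : bool := dpll_ref [::] t.

End DPLL.

(* Ctr = L^0 ; Br1 k = L_1^k (1 <= k <= 2n-3) ; Lf i = L_i^1 (2 <= i <= n) *)
Inductive node := Ctr | Br1 of nat | Lf of nat.
Definition node_dec : comparable node. Proof. rewrite /comparable /decidable; decide equality; decide equality. Defined.
HB.instance Definition _ := comparableMixin node_dec.

Inductive fact := At of node | Visited of node.
Definition fact_dec : comparable fact. Proof. rewrite /comparable /decidable; decide equality; apply: node_dec. Defined.
HB.instance Definition _ := comparableMixin fact_dec.

Inductive action := Move of node & node | Noop of fact.
Definition action_dec : comparable action.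
Proof. rewrite /comparable /decidable; decide equality; (apply: node_dec || apply: fact_dec). Defined.
HB.instance Definition _ := comparableMixin action_dec.

Definition map_nodes (n : nat) : seq node :=
  Ctr :: [seq Br1 k | k <- iota 1 (2 * n - 3)] ++ [seq Lf i | i <- iota 2 (n - 1)].

(* undirected edges, given one orientation *)
Definition edge1 (n : nat) (x y : node) : bool :=
  match x, y with
  | Ctr, Br1 1 => true
  | Br1 k, Br1 k' => (k' == k.+1) && (1 <= k) && (k' <= 2 * n - 3)
  | Ctr, Lf i => (2 <= i) && (i <= n)
  | _, _ => false
  end.
Definition adj (n : nat) (x y : node) : bool := edge1 n x y || edge1 n y x.

Definition map_facts (n : nat) : seq fact :=
  [seq At x | x <- map_nodes n] ++ [seq Visited x | x <- map_nodes n].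

Definition map_acts (n : nat) : seq action :=
  [seq Move p.1 p.2 | p <- [seq (x, y) | x <- map_nodes n, y <- map_nodes n]
                    & adj n p.1 p.2]
  ++ [seq Noop f | f <- map_facts n].

Definition map_pre (a : action) : seq fact :=
  match a with Move x _ => [:: At x] | Noop p => [:: p] end.
Definition map_add (a : action) : seq fact :=
  match a with Move _ y => [:: At y; Visited y] | Noop p => [:: p] end.
Definition map_del (a : action) : seq fact :=
  match a with Move x _ => [:: At x] | Noop _ => [::] end.

Definition map_goals (n : nat) : seq fact :=
  Visited (Br1 1) :: [seq Visited (Lf i) | i <- iota 2 (n - 1)].

Definition MAP1 (n : nat) : seq (seq ((action * nat) * bool)) :=
  graphplan_cnf (map_acts n) map_pre map_add map_del [:: At Ctr]
                (map_goals n) (2 * n - 2).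

(* Main.v *)
Require Import Defs.
From mathcomp Require Import all_boot.
From mathcomp Require Import zify.
Set Implicit Arguments. Unset Strict Implicit. Unset Printing Implicit Defensive.


Section DPLLLB.
Variable V : eqType.
Variable phi : cnf V.
Variable P : passign V -> nat -> Prop.
Hypothesis H1 : forall rho k, P rho k.+1 -> ~~ conflict phi rho.
Hypothesis H2 : forall rho k v, P rho k.+1 -> ~~ assigned rho v ->
  (exists b, P ((v,b)::rho) k.+1) \/ (forall b, P ((v,b)::rho) k).

Lemma unit_litP (rho : passign V) (C : clause V) (l : lit V) : unit_lit rho C = Some l ->
  [/\ l \in C, ~~ lit_false rho l, ~~ lit_true rho l &
      forall l', l' \in C -> l' != l -> lit_false rho l'].
Proof.
rewrite /unit_lit; case: ifP => // Hsat.
case E: (undup _) => [|l0 [|? ?]] // [<-].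
have Hin : l0 \in undup [seq l <- C | ~~ lit_false rho l] by rewrite E inE eqxx.
rewrite mem_undup mem_filter in Hin. case/andP: Hin => Hnf HC.
split => //.
- apply/negP => Ht. move/negbT: Hsat => /hasPn /(_ _ HC). by rewrite /= Ht.
- move=> l' Hl' Hne. apply/negPn/negP => Hnf'.
  have : l' \in undup [seq l <- C | ~~ lit_false rho l] by rewrite mem_undup mem_filter Hnf' Hl'.
  by rewrite E inE (negbTE Hne).
Qed.

Lemma up_step_P rho k : P rho k.+2 -> P (up_step phi rho) k.+2.
Proof.
move=> HP. rewrite /up_step.
case E: (ohead _) => [l|] //.
have : l \in pmap (unit_lit rho) phi.
  by move: E; case: (pmap _ _) => //= ? ? [->]; rewrite inE eqxx.
rewrite mem_pmap => /mapP [C HC /esym Hu].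
case/unit_litP: Hu => HlC Hnf Hnt Hoth.
have Hna : ~~ assigned rho l.1.
  rewrite /assigned negb_or. move: Hnf Hnt {HlC Hoth E}.
  by case: l => v [] /=; rewrite /lit_false /lit_true /= => -> ->.
have Hconf : conflict phi ((l.1, ~~ l.2) :: rho).
  apply/hasP; exists C => //. apply/allP => l' Hl'.
  rewrite /lit_false inE. case: (eqVneq l' l) => [->|Hne].
    by rewrite eqxx.
  by move: (Hoth l' Hl' Hne); rewrite /lit_false => ->; rewrite orbT.
case: (H2 HP Hna) => [[b Hb]|Hall].
- case: (eqVneq b l.2) => [Eb|Nb].
    by rewrite Eb -surjective_pairing in Hb.
  have Eb : b = ~~ l.2 by case: b Nb {Hb}; case: (l.2).
  rewrite Eb in Hb. by move: (H1 Hb); rewrite Hconf.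
- by move: (H1 (Hall (~~ l.2))); rewrite Hconf.
Qed.

Lemma propagate_P rho k : P rho k.+2 -> P (propagate phi rho) k.+2.
Proof.
rewrite /propagate. elim: (size phi) => [|m IH] //= HP.
by apply: up_step_P; apply: IH.
Qed.

Lemma dpll_lb t : forall rho k, P rho k.+1 -> dpll_ref phi rho t -> 2 ^ k <= dsize t.
Proof.
elim: t => [|v t0 IH0 t1 IH1] rho [|k] HP //=.
- move=> Hc. have := H1 (propagate_P HP). by rewrite Hc.
- case/and5P => Hnc Hv Hna Hd0 Hd1.
  case: (H2 (propagate_P HP) Hna) => [[[] Hb]|Hall].
  + have := IH1 _ _ Hb Hd1. lia.
  + have := IH0 _ _ Hb Hd0. lia.
  + have := IH0 _ _ (Hall false) Hd0. have := IH1 _ _ (Hall true) Hd1. rewrite expnS. lia.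
Qed.
End DPLLLB.


Section GPSound.
Variables (F A : eqType) (acts : seq A) (pre add del : A -> seq F) (init : seq F).
Variable plan : nat -> seq A.
Hypothesis P0 : forall t a, a \in plan t.+1 -> a \in acts.
Hypothesis P1 : forall a p, a \in plan 1 -> p \in pre a -> p \in init.
Hypothesis P2 : forall t a p, a \in plan t.+2 -> p \in pre a ->
  exists2 a', a' \in plan t.+1 & p \in add a'.
Hypothesis P3 : forall t a b, a \in plan t.+1 -> b \in plan t.+1 -> a != b ->
  ~~ interferes pre add del a b.

Definition supp t p := if t is t'.+1 then has (fun a => p \in add a) (plan t) else p \in init.

Notation lay := (layer acts pre add del init).

Lemma layerS t : lay t.+1 =
  (fact_layer add (act_layer acts pre (lay t).1 (lay t).2),
   fmutex_next pre add del (act_layer acts pre (lay t).1 (lay t).2) (lay t).2).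
Proof. by rewrite /=; case: (lay t). Qed.

Lemma pre_supp t a p : a \in plan t.+1 -> p \in pre a -> supp t p.
Proof.
case: t => [|t] Ha Hp /=; first exact: P1 Ha Hp.
case: (P2 Ha Hp) => a' Ha' Hp'. by apply/hasP; exists a'.
Qed.

Lemma layer_inv t : (forall p, supp t p -> p \in (lay t).1) /\
  (forall p q, supp t p -> supp t q -> ~~ (lay t).2 p q).
Proof.
elim: t => [|t [IHa IHb]]; first by split.
have Hin : forall a, a \in plan t.+1 -> a \in act_layer acts pre (lay t).1 (lay t).2.
  move=> a Ha. rewrite mem_filter (P0 Ha) andbT. apply/andP; split.
    apply/allP => p Hp; exact: IHa (pre_supp Ha Hp).
  apply/allP => p Hp; apply/allP => q Hq. exact: IHb (pre_supp Ha Hp) (pre_supp Ha Hq).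
have Hnm : forall a b, a \in plan t.+1 -> b \in plan t.+1 ->
    ~~ amutex pre add del (lay t).2 a b.
  move=> a b Ha Hb. rewrite /amutex. case: (eqVneq a b) => //= Hne.
  rewrite negb_or (P3 Ha Hb Hne) /=. apply/hasPn => p Hp; apply/hasPn => q Hq.
  exact: IHb (pre_supp Ha Hp) (pre_supp Hb Hq).
rewrite layerS /=; split.
- move=> p /hasP [a Ha Hp]. rewrite /fact_layer mem_undup.
  apply/flatten_mapP; exists a => //. exact: Hin.
- move=> p q /hasP [a Ha Hp] /hasP [b Hb Hq]. rewrite /fmutex_next.
  apply/negP => /and4P [_ _ _ /allP H].
  have := H a (Hin _ Ha). rewrite Hp /= => /allP /(_ b (Hin _ Hb)). rewrite Hq /=.
  by rewrite (negbTE (Hnm _ _ Ha Hb)).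
Qed.

Lemma plan_sound t a b : a \in plan t.+1 -> b \in plan t.+1 ->
  a \in actions_at acts pre add del init t.+1 /\
  ~~ amutex_at acts pre add del init t.+1 a b.
Proof.
move=> Ha Hb. case: (layer_inv t) => IHa IHb. rewrite /actions_at /amutex_at /=.
split.
  rewrite mem_filter (P0 Ha) andbT. apply/andP; split.
    apply/allP => p Hp; exact: IHa (pre_supp Ha Hp).
  apply/allP => p Hp; apply/allP => q Hq. exact: IHb (pre_supp Ha Hp) (pre_supp Ha Hq).
rewrite /amutex. case: (eqVneq a b) => //= Hne.
rewrite negb_or (P3 Ha Hb Hne) /=. apply/hasPn => p Hp; apply/hasPn => q Hq.
exact: IHb (pre_supp Ha Hp) (pre_supp Hb Hq).
Qed.
End GPSound.


Definition isgoal n (x : node) :=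
  match x with Br1 k => k == 1 | Lf i => (2 <= i) && (i <= n) | Ctr => false end.
Definition wk (x : node) (e : nat) (g : node) (f : nat) (s : nat) : node :=
  if s == f then g else if s == e then x else Ctr.
Definition stepa (w : nat -> node) t :=
  if w t.-1 == w t then Noop (At (w t)) else Move (w t.-1) (w t).
Definition visited (w : nat -> node) t := [seq w s | s <- iota 1 t.-1 & w s.-1 != w s].
Definition wplan (w : nat -> node) t := stepa w t :: [seq Noop (Visited y) | y <- visited w t].
Definition WV n (w : nat -> node) := [/\ w 0 = Ctr, forall s, w s \in map_nodes n &
  forall s, (w s == w s.+1) || adj n (w s) (w s.+1)].

Notation AT n := (actions_at (map_acts n) map_pre map_add map_del [:: At Ctr]).
Notation AM n := (amutex_at (map_acts n) map_pre map_add map_del [:: At Ctr]).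

Lemma move_in n x y : x \in map_nodes n -> y \in map_nodes n -> adj n x y ->
  Move x y \in map_acts n.
Proof.
move=> Hx Hy Ha. rewrite /map_acts mem_cat; apply/orP; left.
apply/mapP; exists (x,y) => //. rewrite mem_filter; apply/andP; split; first exact: Ha. by apply/allpairsP; exists (x,y).
Qed.

Lemma noop_in n f : f \in map_facts n -> Noop f \in map_acts n.
Proof. move=> Hf. rewrite /map_acts mem_cat; apply/orP; right. exact: map_f. Qed.

Lemma at_fact n x : x \in map_nodes n -> At x \in map_facts n.
Proof. move=> Hx. rewrite /map_facts mem_cat (map_f _ Hx). done. Qed.

Lemma vis_fact n x : x \in map_nodes n -> Visited x \in map_facts n.
Proof. move=> Hx. rewrite /map_facts mem_cat (map_f (fun x => Visited x) Hx) orbT. done. Qed.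

Lemma del_at b p : p \in map_del b -> exists x, p = At x.
Proof. by case: b => [x y|f] //=; rewrite inE => /eqP ->; exists x. Qed.

Lemma interf_vis1 y b : ~~ interferes map_pre map_add map_del (Noop (Visited y)) b.
Proof.
rewrite /interferes /=. apply/hasPn => p /del_at [x ->].
by [].

Qed.

Lemma interf_vis2 y b : ~~ interferes map_pre map_add map_del b (Noop (Visited y)).
Proof.
rewrite /interferes /= orbF. apply/hasPn => p /del_at [x ->].
by [].
Qed.

Lemma wplanP w t a : a \in wplan w t ->
  a = stepa w t \/ exists2 s, (1 <= s <= t.-1) && (w s.-1 != w s) & a = Noop (Visited (w s)).
Proof.
rewrite inE => /orP [/eqP ->|]; first by left.
move/mapP => [y Hy ->]; right. move/mapP: Hy => [s Hs ->].
rewrite mem_filter mem_iota in Hs. exists s => //. move: Hs; case/andP => -> /andP [H1 H2].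
rewrite H1 /=. lia.
Qed.

Lemma visited_in w t s : 1 <= s <= t.-1 -> w s.-1 != w s -> w s \in visited w t.
Proof.
move=> Hs Hne. apply/mapP; exists s => //. rewrite mem_filter Hne mem_iota /=. lia.
Qed.

Lemma walk_sound n w t a b : WV n w -> a \in wplan w t.+1 -> b \in wplan w t.+1 ->
  a \in AT n t.+1 /\ ~~ AM n t.+1 a b.
Proof.
case=> H0 Hn Hs. apply: (plan_sound (plan := wplan w)). 
- move=> t' a' /wplanP [->|[s _ ->]].
    rewrite /stepa /=. case: eqP => [_|Hne].
      exact/noop_in/at_fact.
    apply: move_in => //. by move: (Hs t'); case: eqP.
  exact/noop_in/vis_fact.
- move=> a' p /wplanP [->|[s Hs1 _]]; last by lia.
  rewrite /stepa /= H0. by case: eqP => [<-|_].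
- move=> t' a' p /wplanP [->|[s Hs1 ->]].
    move=> Hpre. have Hp : p = At (w t'.+1).
      by move: Hpre; rewrite /stepa /=; case: eqP => [->|_] /=; rewrite mem_seq1 => /eqP.
    exists (stepa w t'.+1); first by rewrite in_cons eqxx.
    rewrite Hp /stepa /=. by case: eqP => _; rewrite ?in_cons ?mem_seq1 eqxx.
  rewrite /= mem_seq1 => /eqP ->. case/andP: Hs1 => Hs1 Hne'.
  case: (eqVneq s t'.+1) => [Es|Ns].
    subst s. exists (stepa w t'.+1); first by rewrite in_cons eqxx.
    rewrite /stepa /=. rewrite /= in Hne'. rewrite (negbTE Hne') /= in_cons mem_seq1 eqxx orbT. done.
  exists (Noop (Visited (w s))); last by rewrite /= mem_seq1 eqxx.
  rewrite in_cons; apply/orP; right. apply: map_f. apply: visited_in => //. lia.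
- move=> t' a' b' /wplanP [->|[s _ ->]] /wplanP [->|[s' _ ->]] Hne.
  + by rewrite eqxx in Hne.
  + exact: interf_vis2.
  + exact: interf_vis1.
  + exact: interf_vis1.
Qed.


Definition optgoal n (o : option node) := if o is Some g then isgoal n g else true.
Definition slotact t (o : option node) :=
  match o with Some g => if odd t then Move Ctr g else Move g Ctr | None => Noop (At Ctr) end.

Lemma goal_adj n g : 2 <= n -> isgoal n g -> adj n Ctr g && adj n g Ctr.
Proof.
move=> Hn. case: g => [|k|i] //=; rewrite /adj /=.
- by move/eqP => ->.
- by move=> ->.
Qed.

Lemma goal_node n g : 2 <= n -> isgoal n g -> g \in map_nodes n.
Proof.
move=> Hn. case: g => [|k|i] //= H; rewrite in_cons mem_cat; apply/orP; right; apply/orP.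
- left. move/eqP: H => ->. apply: map_f. rewrite mem_iota. lia.
- right. apply: map_f. rewrite mem_iota. lia.
Qed.

Lemma ctr_node n : Ctr \in map_nodes n.
Proof. by rewrite in_cons eqxx. Qed.

Definition cg n (x : node) := (x == Ctr) || isgoal n x.

Lemma cg_node n x : 2 <= n -> cg n x -> x \in map_nodes n.
Proof. move=> Hn /orP [/eqP ->|]; [exact: ctr_node|exact: goal_node]. Qed.

Lemma cg_pair n x : 2 <= n -> cg n x ->
  ((Ctr == x) || adj n Ctr x) && ((x == Ctr) || adj n x Ctr).
Proof.
move=> Hn /orP [/eqP ->|Hg]; first by rewrite eqxx.
by case/andP: (goal_adj Hn Hg) => -> ->; rewrite !orbT.
Qed.

Lemma wk_valid n x e g f : 2 <= n -> cg n x -> cg n g ->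
  (x == Ctr) || ((1 <= e) && (e.+1 < f)) -> (g == Ctr) || (1 <= f) ->
  WV n (wk x e g f).
Proof.
move=> Hn Hx Hg Hxe Hgf.
have Px := cg_pair Hn Hx. have Pg := cg_pair Hn Hg.
case/andP: Px => Px1 Px2. case/andP: Pg => Pg1 Pg2.
split.
- rewrite /wk. case: (eqVneq 0 f) => [Ef|_].
    move: Hgf; rewrite -Ef /= orbF. by move/eqP.
  case: (eqVneq 0 e) => [Ee|_] //.
  move: Hxe; rewrite -Ee /=. by rewrite orbF => /eqP.
- move=> s. rewrite /wk. case: ifP => _; first exact: cg_node.
  case: ifP => _; [exact: cg_node|exact: ctr_node].
- have Hcg : forall s, cg n (wk x e g f s).
    move=> s; rewrite /wk. case: ifP => _; first exact: Hg. case: ifP => _; first exact: Hx. by rewrite /cg eqxx.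
  have Hone : forall s, (wk x e g f s == Ctr) || (wk x e g f s.+1 == Ctr).
    move=> s. rewrite /wk. case: (eqVneq x Ctr) => [->|Nx].
      rewrite !if_same. case: (eqVneq s f) => [->|Nsf]; last by rewrite eqxx.
      have -> : (f.+1 == f) = false by apply/negbTE/eqP; lia.
      by rewrite eqxx orbT.
    move: Hxe; rewrite (negbTE Nx) /= => /andP [He1 He2].
    case: (eqVneq s f) => [->|Nsf].
      have -> : (f.+1 == f) = false by apply/negbTE/eqP; lia.
      have -> : (f.+1 == e) = false by apply/negbTE/eqP; lia.
      by rewrite eqxx orbT.
    case: (eqVneq s e) => [->|Nse]; last by rewrite eqxx.
    have -> : (e.+1 == f) = false by apply/negbTE/eqP; lia.
    have -> : (e.+1 == e) = false by apply/negbTE/eqP; lia.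
    by rewrite eqxx orbT.
  move=> s. case/orP: (Hone s) => /eqP ->.
    by case/andP: (cg_pair Hn (Hcg s.+1)).
  by case/andP: (cg_pair Hn (Hcg s)).
Qed.

Lemma stepa_wk x e g f t : stepa (wk x e g f) t =
  if wk x e g f t.-1 == wk x e g f t then Noop (At (wk x e g f t))
  else Move (wk x e g f t.-1) (wk x e g f t).
Proof. by []. Qed.

Lemma wk_ctr e g f s : wk Ctr e g f s = if s == f then g else Ctr.
Proof. by rewrite /wk if_same. Qed.

Lemma cg_ctr n : cg n Ctr.
Proof. by rewrite /cg eqxx. Qed.

Lemma cg_opt n o : optgoal n o -> cg n (odflt Ctr o).
Proof. by case: o => [g /= Hg|_]; rewrite /cg ?Hg ?orbT ?eqxx. Qed.

Lemma slotact_odd t o : odd t -> o != Some Ctr -> slotact t o =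
  if Ctr == odflt Ctr o then Noop (At (odflt Ctr o)) else Move Ctr (odflt Ctr o).
Proof. move=> Ho; case: o => [[|k|i]|] //= _; by rewrite Ho. Qed.

Lemma slotact_even t o : ~~ odd t -> o != Some Ctr -> slotact t o =
  if odflt Ctr o == Ctr then Noop (At Ctr) else Move (odflt Ctr o) Ctr.
Proof. move=> Ho; case: o => [[|k|i]|] //= _; by rewrite (negbTE Ho). Qed.

Lemma opt_nctr g : (if g == Ctr then None else Some g) != Some Ctr.
Proof. by case: (eqVneq g Ctr). Qed.

Definition fslot t := if odd t then t else t.-1.

Lemma stepa_slot x g t : 1 <= t ->
  stepa (wk x 1 g (fslot t)) t = slotact t (if g == Ctr then None else Some g).
Proof.
move=> Ht. rewrite /stepa /wk /fslot. case Hodd: (odd t).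
- rewrite slotact_odd ?Hodd ?opt_nctr // eqxx.
  have -> : (t.-1 == t) = false by apply/negbTE/eqP; lia.
  have -> : (t.-1 == 1) = false.
    apply/negbTE/eqP => E. move: Hodd. have -> : t = 2 by lia. done.
  by case: (eqVneq g Ctr) => [->|Ng] //=; rewrite eq_sym (negbTE Ng).
- rewrite slotact_even ?Hodd ?opt_nctr // eqxx.
  have -> : (t == t.-1) = false by apply/negbTE/eqP; lia.
  have -> : (t == 1) = false by apply/negbTE/eqP => E; rewrite E in Hodd.
  by case E: (g == Ctr) => /=; rewrite ?E //; move/eqP: E => ->.
Qed.

Lemma wk_valid_slot n x g t : 2 <= n -> 1 <= t -> cg n x -> cg n g ->
  (x == Ctr) || (3 <= t) -> WV n (wk x 1 g (fslot t)).
Proof.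
move=> Hn Ht Hx Hg Hxt. apply: wk_valid => //.
  case/orP: Hxt => [->//|H]. apply/orP; right. rewrite /fslot; case: ifP => Ho; lia.
apply/orP; right. rewrite /fslot; case: ifP => Ho; lia.
Qed.

Lemma optg_eq o : (if odflt Ctr o == Ctr then None else Some (odflt Ctr o)) = o \/ o = Some Ctr.
Proof. by case: o => [[]|] /=; auto. Qed.

Lemma AT_slot n t o : 2 <= n -> 1 <= t -> optgoal n o -> slotact t o \in AT n t.
Proof.
move=> Hn Ht Ho. case: t Ht => [|t] // Ht.
have Hw := wk_valid_slot Hn Ht (cg_ctr n) (cg_opt Ho) (orTb _).
have Hst := stepa_slot Ctr (odflt Ctr o) Ht.
have Eo : (if odflt Ctr o == Ctr then None else Some (odflt Ctr o)) = o.
  by case: o Ho {Hw Hst} => [[]|] /=.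
rewrite Eo in Hst.
have := @walk_sound n _ t _ _ Hw (mem_head _ _) (mem_head _ _).
by rewrite Hst; case.
Qed.

Lemma goal_nctr n h : isgoal n h -> h != Ctr.
Proof. by case: h. Qed.

Lemma vis_wplan w t s : 1 <= s <= t.-1 -> w s.-1 != w s ->
  Noop (Visited (w s)) \in wplan w t.
Proof.
move=> Hs Hne. rewrite in_cons; apply/orP; right. apply: map_f. exact: visited_in.
Qed.

Lemma AT_noopV n t h : 2 <= n -> 2 <= t -> isgoal n h -> Noop (Visited h) \in AT n t.
Proof.
move=> Hn Ht Hh. case: t Ht => [|t] // Ht.
have Hw : WV n (wk Ctr 1 h 1).
  have cgh : cg n h by rewrite /cg Hh orbT.
  by apply: (wk_valid Hn (cg_ctr n) cgh); rewrite ?eqxx ?orbT.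
have Hin : Noop (Visited h) \in wplan (wk Ctr 1 h 1) t.+1.
  have := @vis_wplan (wk Ctr 1 h 1) t.+1 1. rewrite /wk /=.
  apply; first lia. by rewrite eq_sym; exact: goal_nctr Hh.
by case: (walk_sound Hw Hin Hin).
Qed.

Lemma NM_slotN n t o h : 2 <= n -> 2 <= t -> isgoal n h -> optgoal n o ->
  (3 <= t) || (o == Some h) ->
  ~~ AM n t (slotact t o) (Noop (Visited h)) && ~~ AM n t (Noop (Visited h)) (slotact t o).
Proof.
move=> Hn Ht Hh Ho Hto. case: t Ht Hto => [|t] // Ht Hto.
have Eo : (if odflt Ctr o == Ctr then None else Some (odflt Ctr o)) = o.
  by case: o Ho {Hto} => [[]|] /=.
have Hhn := goal_nctr Hh.
case H3: (3 <= t.+1).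
- set w := wk h 1 (odflt Ctr o) (fslot t.+1).
  have Hw : WV n w.
    apply: wk_valid_slot => //; last by rewrite H3 orbT.
      by rewrite /cg Hh orbT.
    exact: cg_opt.
  have Hst : stepa w t.+1 = slotact t.+1 o by rewrite /w stepa_slot // Eo.
  have Hin : Noop (Visited h) \in wplan w t.+1.
    have := @vis_wplan w t.+1 1. rewrite /w /wk /=.
    have -> : (1 == fslot t.+1) = false.
      apply/negbTE/eqP; rewrite /fslot; case: ifP => _; lia.
    have -> : (0 == fslot t.+1) = false.
      apply/negbTE/eqP; rewrite /fslot; case: ifP => _; lia.
    rewrite ?eqxx. apply; first lia. by rewrite eq_sym.
  have Hst' : slotact t.+1 o \in wplan w t.+1 by rewrite -Hst mem_head.
  by case: (walk_sound Hw Hst' Hin) => _ ->; case: (walk_sound Hw Hin Hst') => _ ->.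
- move: Hto; rewrite H3 /= => /eqP Eo'. subst o.
  have Et : t = 1 by lia. subst t.
  set w := wk Ctr 1 h 1.
  have Hw : WV n w.
    have cgh : cg n h by rewrite /cg Hh orbT.
  by apply: (wk_valid Hn (cg_ctr n) cgh); rewrite ?eqxx ?orbT.
  have Hst : stepa w 2 = slotact 2 (Some h).
    by rewrite /w /stepa /wk /= (negbTE Hhn).
  have Hin : Noop (Visited h) \in wplan w 2.
    have := @vis_wplan w 2 1. rewrite /w /wk /=. by apply => //; rewrite eq_sym.
  have Hst' : slotact 2 (Some h) \in wplan w 2 by rewrite -Hst mem_head.
  by case: (walk_sound Hw Hst' Hin) => _ ->; case: (walk_sound Hw Hin Hst') => _ ->.
Qed.

Lemma NM_NN n t h h' : 2 <= n -> 4 <= t -> isgoal n h -> isgoal n h' ->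
  ~~ AM n t (Noop (Visited h)) (Noop (Visited h')).
Proof.
move=> Hn Ht Hh Hh'. case: t Ht => [|t] // Ht.
set w := wk h 1 h' 3.
have Hw : WV n w.
  have cgh : cg n h by rewrite /cg Hh orbT.
  have cgh' : cg n h' by rewrite /cg Hh' orbT.
  by apply: (wk_valid Hn cgh cgh'); rewrite ?orbT.
have Hin1 : Noop (Visited h) \in wplan w t.+1.
  have := @vis_wplan w t.+1 1. rewrite /w /wk /=. apply; first lia.
  by rewrite eq_sym; exact: goal_nctr Hh.
have Hin2 : Noop (Visited h') \in wplan w t.+1.
  have := @vis_wplan w t.+1 3. rewrite /w /wk /=. apply; first lia.
  by rewrite eq_sym; exact: goal_nctr Hh'.
by case: (walk_sound Hw Hin1 Hin2).
Qed.


Definition state := seq (nat * option node).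
Definition slot (S : state) j : option (option node) := ohead [seq e.2 | e <- S & e.1 == j].
Definition mslot (S : state) y : option nat := ohead [seq e.1 | e <- S & e.2 == Some y].
Definition matched (S : state) y := mslot S y != None.
Definition free n (S : state) := [seq j <- iota 1 n.-1 | slot S j == None].
Definition Inv n (S : state) := [/\ uniq (map fst S),
   all (fun e => (1 <= e.1 <= n.-1) && optgoal n e.2) S &
   uniq [seq e.2 | e <- S & e.2 != None]].
Definition okopt n (S : state) (o : option node) :=
  if o is Some y then isgoal n y && ~~ matched S y else true.

Definition optv (S : state) j (o : option node) : option bool :=
  match slot S j with
  | Some o' => Some (o == o')
  | None => if o is Some y then (if matched S y then Some false else None) else None
  end.
Definition nval n (S : state) y t : option bool :=
  match mslot S y with
  | Some j => Some (j.*2 <= t)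
  | None => if ~~ has (fun j => j.*2 <= t) (free n S) then Some false
            else if ~~ has (fun j => t < j.*2) (free n S) then Some true else None
  end.
Definition val n (S : state) (v : action * nat) : option bool :=
  let: (a, t) := v in
  match a with
  | Move x y => if x == Ctr then
                  (if isgoal n y && odd t && (t <= 2 * n - 3) then optv S (uphalf t) (Some y)
                   else Some false)
                else if y == Ctr then
                  (if isgoal n x && ~~ odd t && (2 <= t) && (t <= 2 * n - 2)
                   then optv S (uphalf t) (Some x) else Some false)
                else Some false
  | Noop (At x) => if (x == Ctr) && (1 <= t) && (t <= 2 * n - 2) then optv S (uphalf t) None
                   else Some false
  | Noop (Visited y) => if isgoal n y && (2 <= t) then nval n S y t else Some false
  end.

Lemma slot_cons j o (S : state) j' : slot ((j,o)::S) j' = if j == j' then Some o else slot S j'.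
Proof. by rewrite /slot /=; case: ifP. Qed.

Lemma mslot_cons j o (S : state) y : mslot ((j,o)::S) y = if o == Some y then Some j else mslot S y.
Proof. by rewrite /mslot /=; case: ifP. Qed.

Lemma slot_some (S : state) j o : slot S j = Some o -> (j,o) \in S.
Proof.
elim: S => [|[j0 o0] S IH] //. rewrite slot_cons in_cons.
case: eqP => [-> [->]|_ /IH ->]; by rewrite ?eqxx ?orbT.
Qed.

Lemma slot_mem (S : state) j o : uniq (map fst S) -> (j,o) \in S -> slot S j = Some o.
Proof.
elim: S => [|[j0 o0] S IH] //= /andP [Hn Hu]. rewrite slot_cons in_cons.
case/orP => [/eqP [-> ->]|Hin]; first by rewrite eqxx.
case: eqP => [E|_]; last exact: IH.
by move: Hn; rewrite E; move/negP; case; apply/mapP; exists (j,o).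
Qed.

Lemma slot_none (S : state) j o : slot S j = None -> (j,o) \notin S.
Proof.
elim: S => [|[j0 o0] S IH] //. rewrite slot_cons in_cons.
case: eqP => // Ne /IH /negbTE ->. rewrite orbF. apply/negP => /eqP [E _]. by apply: Ne.
Qed.

Lemma mslot_some (S : state) y j : mslot S y = Some j -> (j, Some y) \in S.
Proof.
elim: S => [|[j0 o0] S IH] //. rewrite mslot_cons in_cons.
case: eqP => [-> [->]|_ /IH ->]; by rewrite ?eqxx ?orbT.
Qed.

Lemma mslot_none (S : state) y j : mslot S y = None -> (j, Some y) \notin S.
Proof.
elim: S => [|[j0 o0] S IH] //. rewrite mslot_cons in_cons.
case: eqP => // Ne /IH /negbTE ->. rewrite orbF. apply/negP => /eqP [_ E]. by apply: Ne.
Qed.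

Lemma mslot_mem (S : state) y j : uniq [seq e.2 | e <- S & e.2 != None] ->
  (j, Some y) \in S -> mslot S y = Some j.
Proof.
elim: S => [|[j0 o0] S IH] //. rewrite mslot_cons in_cons.
case E: (o0 == Some y).
- move/eqP: E => ->. rewrite /= => /andP [Hn Hu] /orP [/eqP [->]//|Hin].
  case/negP: Hn. apply/mapP; exists (j, Some y) => //. by rewrite mem_filter Hin.
- move=> Hu /orP [/eqP [_ E']|Hin]; first by rewrite E' eqxx in E.
  apply: IH => //. move: Hu => /=. case: ifP => _ //= /andP [] //.
Qed.

Lemma Inv_mem n (S : state) j o : Inv n S -> (j,o) \in S -> (1 <= j <= n.-1) && optgoal n o.
Proof. by case=> _ /allP H _ /H. Qed.

Lemma mem_free n (S : state) j : (j \in free n S) = (1 <= j <= n.-1) && (slot S j == None).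
Proof. by rewrite mem_filter mem_iota andbC; congr (_ && _); lia. Qed.

Lemma free_uniq n (S : state) : uniq (free n S).
Proof. exact/filter_uniq/iota_uniq. Qed.

Lemma free_cons n (S : state) j o : j \in free n S ->
  free n ((j,o)::S) = rem j (free n S).
Proof.
move=> Hj. rewrite rem_filter ?free_uniq // /free -filter_predI. apply: eq_filter => j' /=.
rewrite slot_cons. case: (eqVneq j j') => [<-|Ne]; first by [].
by [].
Qed.

Lemma mem_free_cons n (S : state) j o j' : j \in free n S ->
  (j' \in free n ((j,o)::S)) = (j' != j) && (j' \in free n S).
Proof. move=> Hj. by rewrite free_cons // rem_filter ?free_uniq // mem_filter. Qed.

Lemma size_free_cons n (S : state) j o : j \in free n S ->
  size (free n ((j,o)::S)) = (size (free n S)).-1.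
Proof. move=> Hj. by rewrite free_cons // size_rem. Qed.

Lemma Inv_cons n (S : state) j o : Inv n S -> j \in free n S -> okopt n S o ->
  Inv n ((j,o)::S).
Proof.
case=> H1 H2 H3 Hj Ho. rewrite mem_free in Hj. case/andP: Hj => Hj1 /eqP Hj2.
split.
- rewrite /= H1 andbT. apply/mapP => -[[j0 o0] Hin /= E]. subst j0.
  by move: (slot_none o0 Hj2); rewrite Hin.
- rewrite /= H2 andbT Hj1 /=. by case: o Ho => [y /andP []|].
- case: o Ho => [y /andP [_ Hm]|] //=. rewrite H3 andbT.
  apply/mapP => -[[j0 o0]]. rewrite mem_filter /= => /andP [_ Hin] E. subst o0.
  move: Hm; rewrite /matched negbK => /eqP Hm.
  by move: (mslot_none j0 Hm); rewrite Hin.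
Qed.

Lemma optv_mono n (S : state) j o j' o' b : j \in free n S -> okopt n S o ->
  optv S j' o' = Some b -> optv ((j,o)::S) j' o' = Some b.
Proof.
rewrite mem_free => /andP [_ /eqP Hj] Ho. rewrite /optv slot_cons.
case: eqP => [E|Ne].
- subst j'. rewrite Hj. case: o' => [y'|] //. case: ifP => // Hm [<-].
  case: o Ho => [y /andP [_ Hy]|] //. congr Some. apply/eqP => -[E]. subst y'.
  by rewrite Hm in Hy.
- case: (slot S j') => [o0|] //. case: o' => [y'|] //. case: ifP => // Hm [<-].
  have -> : matched ((j,o)::S) y' by move: Hm; rewrite /matched mslot_cons; case: (o == Some y').
  done.
Qed.

Lemma free_nonempty n (S : state) j o : j \in free n S -> 2 <= size (free n S) ->
  exists j', j' \in free n ((j,o)::S).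
Proof.
move=> Hj Hs. case E: (free n ((j,o)::S)) => [|j' s]; last by exists j'; rewrite in_cons eqxx.
move: (size_free_cons o Hj). rewrite E /= => H. exfalso. move: Hs H. by case: (size _) => [|[|m]].
Qed.

Lemma nval_mono n (S : state) j o y t b : j \in free n S -> okopt n S o ->
  2 <= size (free n S) -> nval n S y t = Some b -> nval n ((j,o)::S) y t = Some b.
Proof.
move=> Hj Ho Hs. rewrite /nval mslot_cons.
case: eqP => [E|Ne].
- subst o. move: Ho => /andP [_]. rewrite /matched negbK => /eqP ->.
  case: ifP => [/hasPn H [<-]|/negbFE Hp].
    by move: (H j Hj) => /negbTE ->.
  case: ifP => [/hasPn H [<-]|//]. have : j.*2 <= t by move: (H j Hj); lia. by move=> ->.
- case: (mslot S y) => [j0|] //.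
  have Hsub : forall j', j' \in free n ((j,o)::S) -> j' \in free n S.
    by move=> j'; rewrite mem_free_cons // => /andP [].
  case: ifP => [/hasPn H [<-]|Hp].
    have -> : ~~ has (fun j => j.*2 <= t) (free n ((j,o)::S)).
      apply/hasPn => j' /Hsub. exact: H.
    done.
  case: ifP => [/hasPn H [<-]|//].
  have Hq : ~~ has (fun j => t < j.*2) (free n ((j,o)::S)).
    apply/hasPn => j' /Hsub. exact: H.
  case: (free_nonempty o Hj Hs) => j' Hj'.
  have -> : has (fun j => j.*2 <= t) (free n ((j,o)::S)).
    apply/hasP; exists j' => //. move/hasPn: Hq => /(_ j' Hj'). lia.
  by rewrite /= Hq.
Qed.

Lemma val_mono n (S : state) j o v b : j \in free n S -> okopt n S o ->
  2 <= size (free n S) -> val n S v = Some b -> val n ((j,o)::S) v = Some b.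
Proof.
move=> Hj Ho Hs. case: v => a t. rewrite /val.
case: a => [x y|[x|y]].
- case: ifP => _. case: ifP => _ //. exact: optv_mono Hj Ho.
  case: ifP => _ //. case: ifP => _ //. exact: optv_mono Hj Ho.
- case: ifP => _ //. exact: optv_mono Hj Ho.
- case: ifP => _ //. exact: nval_mono Hj Ho Hs.
Qed.


Definition goals_list n := Br1 1 :: [seq Lf i | i <- iota 2 n.-1].

Lemma goals_list_goal n g : g \in goals_list n -> isgoal n g.
Proof.
rewrite in_cons => /orP [/eqP -> //|/mapP [i Hi ->]]. rewrite mem_iota in Hi. rewrite /=. lia.
Qed.

Lemma goals_list_uniq n : uniq (goals_list n).
Proof.
rewrite /goals_list /= map_inj_uniq ?iota_uniq ?andbT; last by move=> i j [].
by apply/mapP => -[i _].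
Qed.

Lemma size_goals_list n : 1 <= n -> size (goals_list n) = n.
Proof. rewrite /= size_map size_iota. lia. Qed.

Lemma size_S_free n (S : state) : Inv n S -> size S + size (free n S) <= n.-1.
Proof.
move=> HI. case: (HI) => H1 /allP H2 H3.
have Hu : uniq (map fst S ++ free n S).
  rewrite cat_uniq H1 free_uniq andbT /=. apply/hasPn => j Hj.
  rewrite mem_free in Hj. case/andP: Hj => _ /eqP Hj.
  apply/negP => /mapP [[j0 o0] Hin /= E]. subst j0.
  by move: (slot_none o0 Hj); rewrite Hin.
have := uniq_leq_size Hu (s2 := iota 1 n.-1).
rewrite size_cat size_map size_iota. apply.
move=> j. rewrite mem_cat => /orP [/mapP [[j0 o0] Hin /= ->]|].
  move: (H2 _ Hin) => /= /andP [Hr _]. rewrite mem_iota. lia.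
by rewrite mem_filter => /andP [].
Qed.

Lemma exists_unmatched n (S : state) : 2 <= n -> Inv n S -> 1 <= size (free n S) ->
  exists g, isgoal n g && ~~ matched S g.
Proof.
move=> Hn HI Hf. case H: (has (fun g => ~~ matched S g) (goals_list n)).
  case/hasP: H => g Hg Hm. exists g. by rewrite Hm goals_list_goal.
exfalso. move/hasPn: H => H.
case: (HI) => _ _ H3.
have Hsub : {subset map Some (goals_list n) <= [seq e.2 | e <- S & e.2 != None]}.
  move=> o /mapP [g Hg ->]. move: (H g Hg). rewrite negbK /matched.
  case E: (mslot S g) => [j|] // _. apply/mapP; exists (j, Some g) => //.
  by rewrite mem_filter (mslot_some E).
have := uniq_leq_size _ Hsub. rewrite map_inj_uniq ?goals_list_uniq; last by move=> ? ? [].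
move=> /(_ isT). rewrite !size_map size_filter.
have := size_goals_list (ltnW Hn).
have := count_size (fun e : nat * option node => e.2 != None) S.
have := size_S_free HI. rewrite /goals_list /= !size_map. lia.
Qed.

Lemma optv_none (S : state) j o : optv S j o = None ->
  slot S j = None /\ (if o is Some y then ~~ matched S y else true).
Proof.
rewrite /optv. case: (slot S j) => [o1|] //. case: o => [y|] //=. by case: ifP.
Qed.

Lemma split_val n (S : state) v : 2 <= n -> Inv n S -> 3 <= size (free n S) ->
  val n S v = None -> forall b, exists j o,
    [/\ j \in free n S, okopt n S o & val n ((j,o)::S) v = Some b].
Proof.
move=> Hn HI Hs. case: v => a t.
case: a => [x y|[x|y]] /=.
- case Ex: (x == Ctr).
  + case Hc: (isgoal n y && odd t && (t <= 2 * n - 3)) => // /optv_none [Hsl Hm] b.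
    exists (uphalf t), (if b then Some y else None). split.
    * rewrite mem_free Hsl eqxx andbT. move: Hc => /andP [/andP [_ Ho] Ht]. lia.
    * case: b => //=. by rewrite Hm andbT; case/andP: Hc => /andP [].
    * rewrite ?Ex ?Hc /optv slot_cons eqxx. by case: b; rewrite ?eqxx.
  + case Ey: (y == Ctr) => //.
    case Hc: (isgoal n x && ~~ odd t && (2 <= t) && (t <= 2 * n - 2)) => // /optv_none [Hsl Hm] b.
    exists (uphalf t), (if b then Some x else None). split.
    * rewrite mem_free Hsl eqxx andbT. move: Hc => /andP [/andP [/andP [_ Ho] Ht] Ht']. lia.
    * case: b => //=. by rewrite Hm andbT; case/andP: Hc => /andP [/andP [] ].
    * rewrite ?Ex ?Ey ?Hc /optv slot_cons eqxx. by case: b; rewrite ?eqxx.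
- case Hc: ((x == Ctr) && (1 <= t) && (t <= 2 * n - 2)) => // /optv_none [Hsl _] b.
  have Hj : uphalf t \in free n S.
    rewrite mem_free Hsl eqxx andbT. move: Hc => /andP [/andP [_ Ht] Ht']. lia.
  case: b.
  + exists (uphalf t), None. split => //. by rewrite ?Hc /optv slot_cons eqxx.
  + have [g /andP [Hg Hm]] := exists_unmatched Hn HI (ltnW (ltnW Hs)).
    exists (uphalf t), (Some g). split => //. by rewrite /= Hg Hm.
    by rewrite ?Hc /optv slot_cons eqxx.
- case Hc: (isgoal n y && (2 <= t)) => //. rewrite /nval.
  case Em: (mslot S y) => [j|] //.
  case: ifP => // /negbFE Hp. case: ifP => // /negbFE Hq _ b.
  have Hy : okopt n S (Some y).
    by rewrite /= /matched Em eqxx andbT; case/andP: Hc.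
  case: b.
  + case/hasP: Hp => j1 Hj1 H1. exists j1, (Some y). split => //.
    by rewrite ?Hc /nval mslot_cons eqxx H1.
  + case/hasP: Hq => j2 Hj2 H2. exists j2, (Some y). split => //.
    rewrite ?Hc /nval mslot_cons eqxx. congr Some. apply/negbTE. lia.
Qed.


Lemma optv_true (S : state) j o : optv S j o = Some true -> slot S j = Some o.
Proof.
rewrite /optv. case: (slot S j) => [o'|] /=; first by move=> [/eqP ->].
by case: o => [y|] //; case: ifP.
Qed.

Lemma val_true n (S : state) a t : val n S (a,t) = Some true ->
  (exists o, [/\ slot S (uphalf t) = Some o, a = slotact t o, optgoal n o, 1 <= t & t <= 2 * n - 2]) \/
  (exists y, [/\ a = Noop (Visited y), isgoal n y, 2 <= t & nval n S y t = Some true]).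
Proof.
rewrite /val. case: a => [x y|[x|y]].
- case: (eqVneq x Ctr) => [->|Nx].
    case: ifP => // /andP [/andP [Hy Ho] Ht] /optv_true Hs. left.
    exists (Some y). split => //=; [by rewrite Ho | lia | lia].
  case: (eqVneq y Ctr) => [->|Ny] //.
  case: ifP => // /andP [/andP [/andP [Hx Ho] Ht] Ht'] /optv_true Hs. left.
  exists (Some x). split => //=; [by rewrite (negbTE Ho) | lia].
- case: ifP => // /andP [/andP [/eqP -> Ht] Ht'] /optv_true Hs. left.
  by exists None; split.
- case: ifP => // /andP [Hy Ht] Hn. right. by exists y.
Qed.

Lemma free_range n (S : state) j : j \in free n S -> 1 <= j <= n.-1.
Proof. by rewrite mem_free => /andP []. Qed.

Lemma free_ge2 n (S : state) : 2 <= size (free n S) -> exists2 j, j \in free n S & 2 <= j.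
Proof.
move=> Hs. case H: (has (fun j => 2 <= j) (free n S)); first by case/hasP: H => j; exists j.
exfalso. move/hasPn: H => H.
have Hsub : {subset free n S <= [:: 1]}.
  move=> j Hj. rewrite inE. apply/eqP. move: (H j Hj) (free_range Hj). lia.
have := uniq_leq_size (free_uniq n S) Hsub. move=> /= Hle. by have := leq_trans Hs Hle.
Qed.

Lemma nval_T n (S : state) y : Inv n S -> 1 <= size (free n S) ->
  nval n S y (2 * n - 2) = Some true.
Proof.
move=> HI Hs. rewrite /nval. case E: (mslot S y) => [j|].
  move: (Inv_mem HI (mslot_some E)) => /andP [Hj _]. congr Some. apply/idP. lia.
case F: (free n S) Hs => [|j0 s] //= _.
have Hr : forall j, j \in free n S -> j.*2 <= 2 * n - 2.
  move=> j /free_range. lia.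
rewrite F in Hr.
rewrite (_ : j0.*2 <= 2 * n - 2); last by apply: Hr; rewrite inE eqxx.
rewrite /=. case: ifP => // /negbFE /orP [H|/hasP [j Hj H]].
  move: (Hr j0 (mem_head _ _)). lia.
have Hjj : j \in j0 :: s by rewrite inE Hj orbT. move: (Hr j Hjj). lia.
Qed.

Lemma nval_small n (S : state) y t : Inv n S -> 2 <= size (free n S) ->
  nval n S y t = Some true -> t <= 3 -> mslot S y = Some 1.
Proof.
move=> HI Hs. rewrite /nval. case E: (mslot S y) => [j|].
  move: (Inv_mem HI (mslot_some E)) => /andP [Hj _] [H] Ht. congr Some. lia.
case: (free_ge2 Hs) => j Hj H2.
case: ifP => // _. case: ifP => [/hasPn /(_ j Hj) H _ Ht|//]. lia.
Qed.


Lemma sup_AtC n (S : state) t : 2 <= n -> Inv n S -> odd t -> 3 <= t -> t <= 2 * n - 2 ->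
  exists a', [/\ a' \in AT n t.-1, At Ctr \in map_add a' & val n S (a', t.-1) != Some false].
Proof.
move=> Hn HI Ho Ht1 Ht2.
case Es: (slot S (uphalf t.-1)) => [[g|]|].
- have Hg : isgoal n g by case/andP: (Inv_mem HI (slot_some Es)).
  exists (Move g Ctr). split.
  + have := @AT_slot n t.-1 (Some g) Hn. rewrite /= (_ : odd t.-1 = false); last by lia.
    apply => //. lia.
  + by rewrite /= !inE eqxx.
  + rewrite /val (negbTE (goal_nctr Hg)) eqxx Hg /=.
    rewrite (_ : odd t.-1 = false); last by lia.
    rewrite /= (_ : 1 < t.-1); last by lia. rewrite (_ : t.-1 <= 2 * n - 2); last by lia.
    by rewrite /optv Es eqxx.
- exists (Noop (At Ctr)). split.
  + have := @AT_slot n t.-1 None Hn. apply => //. lia.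
  + by rewrite /= inE eqxx.
  + rewrite /val eqxx /= (_ : 0 < t.-1); last by lia.
    rewrite (_ : t.-1 <= 2 * n - 2); last by lia.
    by rewrite /optv Es.
- exists (Noop (At Ctr)). split.
  + have := @AT_slot n t.-1 None Hn. apply => //. lia.
  + by rewrite /= inE eqxx.
  + rewrite /val eqxx /= (_ : 0 < t.-1); last by lia.
    rewrite (_ : t.-1 <= 2 * n - 2); last by lia.
    by rewrite /optv Es.
Qed.

Lemma valNV n (S : state) y t : isgoal n y -> 2 <= t -> val n S (Noop (Visited y), t) = nval n S y t.
Proof. by move=> Hy Ht; rewrite /val Hy Ht. Qed.

Lemma valMC n (S : state) y t : isgoal n y -> odd t -> t <= 2 * n - 3 ->
  val n S (Move Ctr y, t) = optv S (uphalf t) (Some y).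
Proof. by move=> Hy Ho Ht; rewrite /val eqxx Hy Ho Ht. Qed.

Lemma AT_MC n t y : 2 <= n -> odd t -> isgoal n y -> Move Ctr y \in AT n t.
Proof.
move=> Hn Ho Hy. have := @AT_slot n t (Some y) Hn. rewrite /= Ho. apply => //.
by case: t Ho.
Qed.

Lemma sup_N n (S : state) y t : 2 <= n -> Inv n S -> 2 <= size (free n S) -> isgoal n y ->
  2 <= t -> t <= 2 * n - 2 -> nval n S y t = Some true ->
  exists a', [/\ a' \in AT n t.-1, Visited y \in map_add a' & val n S (a', t.-1) != Some false].
Proof.
move=> Hn HI Hs Hy Ht1 Ht2 H. move: (H). rewrite /nval. case E: (mslot S y) => [j0|].
- move=> [Hj0]. move: (Inv_mem HI (mslot_some E)) => /andP [Hr _].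
  case: (ltnP (j0.*2) t) => Hlt.
  + exists (Noop (Visited y)). split.
    * apply: AT_noopV => //. lia.
    * by rewrite /= inE eqxx.
    * rewrite valNV //; last by lia. rewrite /nval E.
      have -> : j0.*2 <= t.-1 by lia.
      done.
  + exists (Move Ctr y). split.
    * apply: AT_MC => //. lia.
    * by rewrite /= !inE eqxx orbT.
    * rewrite valMC //; try lia. rewrite (_ : uphalf t.-1 = j0); last by lia.
      case: HI => H1 _ _. by rewrite /optv (slot_mem H1 (mslot_some E)) eqxx.
- case: ifP => // /negbFE Hp. case: ifP => // /hasPn Hq _.
  case Hodd: (odd t).
  + exists (Noop (Visited y)). split.
    * apply: AT_noopV => //. lia.
    * by rewrite /= inE eqxx.
    * rewrite valNV //; last by lia. rewrite /nval E.
      have -> : has (fun j => j.*2 <= t.-1) (free n S).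
        case/hasP: Hp => j Hj Hjt. apply/hasP; exists j => //. move: (Hq j Hj). lia.
      have -> : ~~ has (fun j => t.-1 < j.*2) (free n S).
        apply/hasPn => j Hj. move: (Hq j Hj). lia.
      done.
  + case Hsf: (uphalf t.-1 \in free n S).
    * exists (Move Ctr y). split.
      -- apply: AT_MC => //. lia.
      -- by rewrite /= !inE eqxx orbT.
      -- rewrite valMC //; try lia. rewrite mem_free in Hsf. case/andP: Hsf => _ /eqP Hsl.
         by rewrite /optv Hsl /matched E.
    * have Ht4 : 4 <= t.
        case: (free_ge2 Hs) => j Hj Hj2. move: (Hq j Hj). lia.
      exists (Noop (Visited y)). split.
      -- apply: AT_noopV => //. lia.
      -- by rewrite /= inE eqxx.
      -- rewrite valNV //; last by lia. rewrite /nval E.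
         have Hne : forall j, j \in free n S -> j != uphalf t.-1.
           by move=> j Hj; apply/negP => /eqP E'; rewrite -E' Hj in Hsf.
         have -> : has (fun j => j.*2 <= t.-1) (free n S).
           case/hasP: Hp => j Hj Hjt. apply/hasP; exists j => //.
           move: (Hq j Hj) (Hne j Hj). lia.
         have -> : ~~ has (fun j => t.-1 < j.*2) (free n S).
           apply/hasPn => j Hj. move: (Hq j Hj) (Hne j Hj). lia.
         done.
Qed.


Definition lok n (S : state) (l : (action * nat) * bool) := val n S l.1 != Some (~~ l.2).

Lemma sup_has n (S : state) t p a' : a' \in AT n t -> p \in map_add a' ->
  val n S (a',t) != Some false ->
  has (lok n S) [seq ((a'', t), true) | a'' <- AT n t & p \in map_add a''].
Proof.
move=> Ha Hp Hv. apply/hasP; exists ((a',t),true) => //.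
apply/mapP; exists a' => //. by rewrite mem_filter Hp Ha.
Qed.

Lemma pre_ok n (S : state) t a p : 2 <= n -> Inv n S -> 2 <= size (free n S) ->
  2 <= t -> t <= 2 * n - 2 -> p \in map_pre a -> val n S (a,t) = Some true ->
  has (lok n S) [seq ((a', t.-1), true) | a' <- AT n t.-1 & p \in map_add a'].
Proof.
move=> Hn HI Hs Ht1 Ht2 Hp /val_true [[o [Hsl Ea Ho _ _]]|[y [Ea Hy _ HN]]]; subst a.
- case Hodd: (odd t).
  + have Ep : p = At Ctr.
      by move: Hp; case: o {Hsl} Ho => [g|] _ /=; rewrite ?Hodd /= inE => /eqP.
    subst p. have [a' [Ha' Hadd Hv]] := sup_AtC Hn HI Hodd (ltac:(lia)) Ht2.
    exact: sup_has Ha' Hadd Hv.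
  + case: o Hsl Ho Hp => [g|] Hsl Ho Hp.
    * move: Hp; rewrite /= Hodd /= inE => /eqP ->.
      apply: (@sup_has _ _ _ _ (Move Ctr g)).
      -- apply: AT_MC => //. lia.
      -- by rewrite /= inE eqxx.
      -- rewrite valMC //; try lia. rewrite (_ : uphalf t.-1 = uphalf t); last by lia.
         by rewrite /optv Hsl eqxx.
    * move: Hp; rewrite /= inE => /eqP ->.
      apply: (@sup_has _ _ _ _ (Noop (At Ctr))).
      -- apply: (@AT_slot n t.-1 None) => //. lia.
      -- by rewrite /= inE eqxx.
      -- rewrite /val eqxx /= (_ : 0 < t.-1); last by lia.
         rewrite (_ : t.-1 <= 2 * n - 2); last by lia.
         rewrite (_ : uphalf t.-1 = uphalf t); last by lia.
         by rewrite /optv Hsl.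
- move: Hp; rewrite /= inE => /eqP ->.
  have [a' [Ha' Hadd Hv]] := sup_N Hn HI Hs Hy Ht1 Ht2 HN.
  exact: sup_has Ha' Hadd Hv.
Qed.

Lemma slot1 n (S : state) y t : Inv n S -> 2 <= size (free n S) ->
  nval n S y t = Some true -> t <= 3 -> slot S 1 = Some (Some y).
Proof.
move=> HI Hs HN Ht. have E := nval_small HI Hs HN Ht.
case: HI => H1 _ _. exact: slot_mem H1 (mslot_some E).
Qed.

Lemma mutex_ok n (S : state) t a b : 2 <= n -> Inv n S -> 2 <= size (free n S) ->
  AM n t a b -> val n S (a,t) = Some true -> val n S (b,t) = Some true -> False.
Proof.
move=> Hn HI Hs Hab Ha Hb.
have Hne : a != b by move: Hab; rewrite /amutex_at /amutex => /andP [].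
case/val_true: Ha => [[o [Hsl Ea Ho Ht1 Ht2]]|[y [Ea Hy Ht HN]]];
case/val_true: Hb => [[o' [Hsl' Eb Ho' Ht1' Ht2']]|[y' [Eb Hy' Ht' HN']]]; subst a b.
- move: Hsl'; rewrite Hsl => -[E]. by rewrite E eqxx in Hne.
- case H3: (3 <= t).
    have := NM_slotN Hn Ht' Hy' Ho (introT orP (or_introl H3)). by rewrite Hab.
  have Et : t = 2 by lia. subst t.
  have E1 := slot1 HI Hs HN' (ltac:(lia)). rewrite /= E1 in Hsl. case: Hsl => Eo. subst o.
  have := NM_slotN Hn Ht' Hy' Ho (introT orP (or_intror (eqxx _))). by rewrite Hab.
- case H3: (3 <= t).
    have := NM_slotN Hn Ht Hy Ho' (introT orP (or_introl H3)). by rewrite Hab andbF.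
  have Et : t = 2 by lia. subst t.
  have E1 := slot1 HI Hs HN (ltac:(lia)). rewrite /= E1 in Hsl'. case: Hsl' => Eo. subst o'.
  have := NM_slotN Hn Ht Hy Ho' (introT orP (or_intror (eqxx _))). by rewrite Hab andbF.
- case H4: (4 <= t).
    have := NM_NN Hn H4 Hy Hy'. by rewrite Hab.
  have E1 := slot1 HI Hs HN (ltac:(lia)). have E2 := slot1 HI Hs HN' (ltac:(lia)).
  rewrite E1 in E2. case: E2 => E. by rewrite E eqxx in Hne.
Qed.

Lemma map_goalsP n g : g \in map_goals n -> exists2 y, g = Visited y & isgoal n y.
Proof.
rewrite /map_goals in_cons => /orP [/eqP ->|/mapP [i Hi ->]]; first by exists (Br1 1).
exists (Lf i) => //. rewrite mem_iota in Hi. rewrite /=. lia.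
Qed.

Lemma clause_ok n (S : state) : 2 <= n -> Inv n S -> 2 <= size (free n S) ->
  forall C, C \in MAP1 n -> has (lok n S) C.
Proof.
move=> Hn HI Hs C. rewrite /MAP1 /graphplan_cnf !mem_cat => /orP [H|/orP [H|H]].
- move: H; rewrite /goal_clauses => /mapP [g /map_goalsP [y -> Hy] ->].
  apply/hasP; exists ((Noop (Visited y), 2 * n - 2), true).
    apply/mapP; exists (Noop (Visited y)) => //. rewrite mem_filter /= inE eqxx /=.
    apply: AT_noopV => //. lia.
  rewrite /lok. rewrite valNV //; last by lia. rewrite nval_T //. lia.
- move: H; rewrite /pre_clauses => /flatten_mapP [t Ht /flatten_mapP [a Ha /mapP [p Hp ->]]].
  rewrite mem_iota in Ht. rewrite [has _ _]/=.
  have -> : lok n S ((a,t),false) = (val n S (a,t) != Some true) by [].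
  apply/orP. case: (boolP (val n S (a,t) == Some true)) => Hv; last by left.
  right. apply: (pre_ok Hn HI Hs _ _ Hp (eqP Hv)); lia.
- move: H; rewrite /mutex_clauses => /flatten_mapP [t Ht /flatten_mapP [a Ha /mapP [b Hb ->]]].
  rewrite mem_filter in Hb. case/andP: Hb => Hab Hb.
  case: (boolP (val n S (a,t) == Some true)) => Hva; last first.
    apply/hasP; exists ((a,t),false); [exact: mem_head | exact: Hva].
  case: (boolP (val n S (b,t) == Some true)) => Hvb; last first.
    apply/hasP; exists ((b,t),false); [by rewrite !inE eqxx orbT | exact: Hvb].
  exfalso. exact: (mutex_ok Hn HI Hs Hab (eqP Hva) (eqP Hvb)).
Qed.


Definition Good n (rho : passign (action * nat)%type) k := exists S : state,
  [/\ Inv n S, (forall l, l \in rho -> val n S l.1 = Some l.2) & k.+2 <= size (free n S)].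

Lemma free_n_le n (S : state) : size (free n S) <= n.-1.
Proof. rewrite /free. have := size_filter (fun j => slot S j == None) (iota 1 n.-1).
have := count_size (fun j => slot S j == None) (iota 1 n.-1). rewrite size_iota. lia. Qed.

Lemma Good_H1 n rho k : Good n rho k.+1 -> ~~ conflict (MAP1 n) rho.
Proof.
case=> S [HI Hsub Hs]. have Hn : 2 <= n by have := free_n_le n S; lia.
apply/hasPn => C HC. apply/negP => /allP Hf.
have /hasP [l Hl Hok] := clause_ok Hn HI (ltac:(lia)) HC.
move: (Hf l Hl). rewrite /lit_false => /Hsub /= Hv.
by move: Hok; rewrite /lok Hv eqxx.
Qed.

Lemma Good_H2 n rho k v : Good n rho k.+1 -> ~~ assigned rho v ->
  (exists b, Good n ((v,b)::rho) k.+1) \/ (forall b, Good n ((v,b)::rho) k).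
Proof.
case=> S [HI Hsub Hs] _. have Hn : 2 <= n by have := free_n_le n S; lia.
case E: (val n S v) => [b|].
- left. exists b, S. split => // l. rewrite in_cons => /orP [/eqP ->|/Hsub] //.
- right => b. have [j [o [Hj Ho Hv]]] := split_val Hn HI (ltac:(lia)) E b.
  exists ((j,o)::S). split.
  + exact: Inv_cons.
  + move=> l. rewrite in_cons => /orP [/eqP ->|/Hsub] //.
    apply: val_mono => //. lia.
  + rewrite size_free_cons //. lia.
Qed.

Lemma Good_init n : 5 <= n -> Good n [::] (n - 5).+1.
Proof.
move=> Hn. exists [::]. split => //.
rewrite /free (eq_filter (a2 := predT)) ?filter_predT ?size_iota //. lia.
Qed.

Theorem corollary1 :
  exists c : nat, 0 < c /\ exists N : nat,
    forall n : nat, 2 <= n -> N <= n ->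
    forall t : dtree (action * nat)%type,
      DPLL_refutation (MAP1 n) t -> 2 ^ (n %/ c) <= dsize t.
Proof.
exists 2; split => //. exists 10 => n _ Hn t Hd.
have H5 : 5 <= n by lia.
have H := @dpll_lb _ (MAP1 n) (Good n) (@Good_H1 n) (@Good_H2 n) t [::] (n - 5) (Good_init H5) Hd.
apply: leq_trans H. rewrite leq_exp2l //. lia.
Qed.
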